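(* Let $p\in B(\mathcal H)$ be selfadjoint and suppose that for every $\omega\in\{\omega_-,\omega_+,\omega_1,\dots,\omega_{N-1}\}$, $$L_{-,\omega}\,p=p\,L_{-,\omega}\,p\qquad\text{and}\qquad L_{-,\omega}^*\,p=p\,L_{-,\omega}^*\,p.$$ Then $p$ is harmonic for $(\mathcal T_t^* )_{t\ge0}$.
   Context: Fix integers $N\ge 2$ and $n_1\ge n_2\ge\dots\ge n_N\ge 1$. Let $\mathcal H$ be a finite-dimensional complex Hilbert space with orthonormal basis $\{|-\rangle,|+\rangle\}\cup\{|a_k\rangle:1\le k\le N,\ 0\le a\le n_k-1\}$. For vectors $x,y$, $|x\rangle\langle y|$ denotes the operator $u\mapsto\langle y,u\rangle x$. Put $E_k=\mathrm{span}\{|a_k\rangle:0\le a\le n_k-1\}$, $P_k$ the orthogonal projection onto $E_k$, $P_\pm=|\pm\rangle\langle\pm|$, $\zeta_k=e^{2\pi i/n_k}$, and $\varphi_{a_k}=n_k^{-1/2}\sum_{b=0}^{n_k-1}\zeta_k^{-ba}|b_k\rangle$. For $1\le k\le N-1$ let $Z_k=n_k^{-1/2}\sum_{b=0}^{n_{k+1}-1}\sum_{a=0}^{n_k-1}\zeta_k^{ba}|b_{k+1}\rangle\langle a_k|$, $|Z|_k=Z_k^*Z_k$. Let $\omega$ range over $\{\omega_+,\omega_-,\omega_1,\dots,\omega_{N-1}\}$ and let $\Gamma_{\pm,\omega}>0$, $\gamma_{\pm,\omega}\in\mathbb R$ be constants. Kraus operators: $L_{-,\omega_+}=\sqrt{n_1\Gamma_{-,\omega_+}}|\varphi_{0_1}\rangle\langle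 +|$, $L_{+,\omega_+}=\sqrt{n_1\Gamma_{+,\omega_+}}|+\rangle\langle\varphi_{0_1}|$, $L_{-,\omega_k}=\sqrt{\Gamma_{-,\omega_k}}Z_k$, $L_{+,\omega_k}=\sqrt{\Gamma_{+,\omega_k}}Z_k^*$, $L_{-,\omega_-}=\sqrt{\Gamma_{-,\omega_-}}|-\rangle\langle\varphi_{0_N}|$, $L_{+,\omega_-}=0$. $H_{\mathrm{eff}}=n_1\gamma_{-,\omega_+}P_+-n_1\gamma_{+,\omega_+}|\varphi_{0_1}\rangle\langle\varphi_{0_1}|+\gamma_{-,\omega_-}|\varphi_{0_N}\rangle\langle\varphi_{0_N}|-\gamma_{+,\omega_-}P_-+\sum_{k=1}^{N-1}(\gamma_{-,\omega_k}|Z|_k-\gamma_{+,\omega_k}P_{k+1})$. The dual generator is $\mathcal L^*(x)=i[H_{\mathrm{eff}},x]+\sum_{\omega}\sum_{\epsilon=\pm}\big(L_{\epsilon,\omega}^*xL_{\epsilon,\omega}-\tfrac12\{L_{\epsilon,\omega}^*L_{\epsilon,\omega},x\}\big)$ and $\mathcal T_t^*=e^{t\mathcal L^*}$. A selfadjoint $p$ is harmonic if $\mathcal T_t^*(p)=p$ for all $t\ge0$. *)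

(* Defs.v *)
From mathcomp Require Import all_boot all_order all_algebra.
From mathcomp Require Import all_classical all_reals all_analysis.
From mathcomp Require Import complex.
Import GRing.Theory Num.Theory numFieldNormedType.Exports.

Set Implicit Arguments.
Unset Strict Implicit.
Unset Printing Implicit Defensive.

Local Open Scope ring_scope.
Local Open Scope classical_set_scope.

(* Conventions (0-indexed): the paper's block index k = 1..N is our k = 0..N-1,
   so n_k (paper) = n (k-1) here.  The paper's omega_k, k = 1..N-1, is our
   [inr k] with k : 'I_N.-1 (so paper omega_{k+1} <-> our inr k).            *)

Section QMS.
Variable R : realType.
Local Notation C := R[i].
Variable N : nat.
Variable n : nat -> nat.

(* Orthonormal basis index: inl false = |->, inl true = |+>,
   inr (existT k a) = |a_k> with k : 'I_N, a : 'I_(n k).                     *)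
Definition Idx : finType := (bool + {k : 'I_N & 'I_(n k)})%type.

(* Channel labels: inl true = omega_+, inl false = omega_-, inr k = omega_k. *)
Definition Omega : finType := (bool + 'I_N.-1)%type.

Definition vec := Idx -> C.
Definition op := Idx -> Idx -> C.

Definition rC (r : R) : C := (r +i* 0)%C.

Definition op0 : op := fun _ _ => 0.
Definition opadd (A B : op) : op := fun i j => A i j + B i j.
Definition opsub (A B : op) : op := fun i j => A i j - B i j.
Definition opscale (c : C) (A : op) : op := fun i j => c * A i j.
Definition opmul (A B : op) : op := fun i j => \sum_(l : Idx) A i l * B l j.
Definition adj (A : op) : op := fun i j => ((A j i)^*)%C.
Definition ketbra (x y : vec) : op := fun i j => x i * ((y j)^*)%C.
Definition basis (i : Idx) : vec := fun j => if j == i then 1 else 0.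

Definition selfadjoint (A : op) := adj A = A.

Definition ket_minus : vec := basis (inl false).
Definition ket_plus : vec := basis (inl true).
Definition P_minus : op := ketbra ket_minus ket_minus.
Definition P_plus : op := ketbra ket_plus ket_plus.

(* orthogonal projection onto E_k (our 0-indexed k) *)
Definition Pblock (k : nat) : op := fun i j =>
  if i == j then (match i with inr (existT k' _) => if val k' == k then 1 else 0
                            | inl _ => 0 end)
  else 0.

Definition zeta (m : nat) : C :=
  (cos (2 * pi / m%:R) +i* sin (2 * pi / m%:R))%C.
Definition isqrt (m : nat) : C := rC (Num.sqrt (m%:R))^-1.

Definition phi (k a : nat) : vec := fun i =>
  match i with
  | inr (existT k' b) =>
      if val k' == k then isqrt (n k) * (zeta (n k) ^+ (val b * a))^-1 else 0
  | inl _ => 0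
  end.

Definition Z (k : nat) : op := fun i j =>
  match i, j with
  | inr (existT k1 b), inr (existT k0 a) =>
      if (val k1 == k.+1) && (val k0 == k)
      then isqrt (n k) * zeta (n k) ^+ (val b * val a) else 0
  | _, _ => 0
  end.

Definition absZ (k : nat) : op := opmul (adj (Z k)) (Z k).

Variable Gam : bool -> Omega -> R.  (* Gam true w = Gamma_{+,w}, Gam false w = Gamma_{-,w} *)
Variable gam : bool -> Omega -> R.  (* gam true w = gamma_{+,w}, gam false w = gamma_{-,w} *)

Definition w_plus : Omega := inl true.
Definition w_minus : Omega := inl false.

Definition phi01 : vec := phi 0 0.
Definition phi0N : vec := phi N.-1 0.

(* Kraus operators L_{eps,w}; eps = true is '+', eps = false is '-' *)
Definition Kraus (eps : bool) (w : Omega) : op :=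
  match w with
  | inl true =>
      if eps then opscale (rC (Num.sqrt ((n 0)%:R * Gam true w))) (ketbra ket_plus phi01)
      else opscale (rC (Num.sqrt ((n 0)%:R * Gam false w))) (ketbra phi01 ket_plus)
  | inl false =>
      if eps then op0
      else opscale (rC (Num.sqrt (Gam false w))) (ketbra ket_minus phi0N)
  | inr k =>
      if eps then opscale (rC (Num.sqrt (Gam true w))) (adj (Z (val k)))
      else opscale (rC (Num.sqrt (Gam false w))) (Z (val k))
  end.

Definition opsum (F : 'I_N.-1 -> op) : op := fun i j => \sum_(k : 'I_N.-1) F k i j.

Definition Heff : op :=
  opadd (opscale (rC ((n 0)%:R * gam false w_plus)) P_plus)
  (opadd (opscale (rC (- ((n 0)%:R * gam true w_plus))) (ketbra phi01 phi01))
  (opadd (opscale (rC (gam false w_minus)) (ketbra phi0N phi0N))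
  (opadd (opscale (rC (- gam true w_minus)) P_minus)
   (opsum (fun k => opsub (opscale (rC (gam false (inr k))) (absZ (val k)))
                          (opscale (rC (gam true (inr k))) (Pblock (val k).+1))))))).

Definition Lstar (x : op) : op := fun i j =>
  ('i%C * (opmul Heff x i j - opmul x Heff i j)) +
  \sum_(w : Omega) \sum_(eps : bool)
     (let L := Kraus eps w in
      let LL := opmul (adj L) L in
      opmul (opmul (adj L) x) L i j
      - 2^-1 * (opmul LL x i j + opmul x LL i j)).

Definition expL_partial (t : R) (x : op) (M : nat) : op := fun i j =>
  \sum_(k < M) rC (t ^+ k / (factorial k)%:R) * iter k Lstar x i j.

(* T^*_t(x) = e^{t L^*}(x) = y, the exponential series converging entrywise *)
Definition Tstar_is (t : R) (x y : op) : Prop :=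
  forall i j : Idx,
    (fun M => complex.Re (expL_partial t x M i j)) @ \oo --> complex.Re (y i j) /\
    (fun M => complex.Im (expL_partial t x M i j)) @ \oo --> complex.Im (y i j).

Definition is_harmonic (p : op) : Prop :=
  selfadjoint p /\ forall t : R, 0 <= t -> Tstar_is t p p.

End QMS.

(* Main.v *)
Require Import Defs.
From mathcomp Require Import all_boot all_order all_algebra.
From mathcomp Require Import all_classical all_reals all_analysis.
From mathcomp Require Import complex.
From mathcomp Require Import ring lra.
Import Order.TTheory GRing.Theory Num.Theory numFieldNormedType.Exports.
Local Open Scope ring_scope.


Section S.
Variable R : realType.
Local Notation C := R[i].
Variable N : nat.
Variable n : nat -> nat.
Local Notation op := (op R N n).
Local Notation Idx := (Idx N n).

Lemma opE (A B : op) : (forall i j, A i j = B i j) -> A = B.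
Proof. by move=> h; apply/funext=> i; apply/funext=> j. Qed.

Lemma opmulA (A B D : op) : opmul (opmul A B) D = opmul A (opmul B D).
Proof.
apply: opE => i j; rewrite /opmul.
under eq_bigr do rewrite mulr_suml.
rewrite exchange_big /=; apply: eq_bigr => l _.
by rewrite mulr_sumr; apply: eq_bigr => m _; rewrite mulrA.
Qed.

Lemma adjK (A : op) : adj (adj A) = A.
Proof. by apply: opE => i j; rewrite /adj conjcK. Qed.

Lemma adj_mul (A B : op) : adj (opmul A B) = opmul (adj B) (adj A).
Proof.
apply: opE => i j; rewrite /adj /opmul rmorph_sum; apply: eq_bigr => l _.
by rewrite rmorphM mulrC.
Qed.

Lemma adj_scale c (A : op) : adj (opscale c A) = opscale (c^*)%C (adj A).
Proof. by apply: opE => i j; rewrite /adj /opscale rmorphM. Qed.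

Lemma opmul_scalel c (A B : op) : opmul (opscale c A) B = opscale c (opmul A B).
Proof.
apply: opE => i j; rewrite /opmul /opscale mulr_sumr.
by apply: eq_bigr => l _; rewrite mulrA.
Qed.

Lemma opmul_scaler c (A B : op) : opmul A (opscale c B) = opscale c (opmul A B).
Proof.
apply: opE => i j; rewrite /opmul /opscale mulr_sumr.
by apply: eq_bigr => l _; rewrite mulrCA.
Qed.

Lemma opscaleK c (A : op) : c != 0 -> opscale c^-1 (opscale c A) = A.
Proof. by move=> c0; apply: opE => i j; rewrite /opscale mulKf. Qed.

Lemma adj_ketbra (x y : vec R N n) : adj (ketbra x y) = ketbra y x.
Proof. by apply: opE => i j; rewrite /adj /ketbra rmorphM /= conjcK mulrC. Qed.

Definition ip (y y' : vec R N n) : C := \sum_l (y l)^*%C * y' l.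

Lemma ketbra_mul (x y y' z : vec R N n) :
  opmul (ketbra x y) (ketbra y' z) = opscale (ip y y') (ketbra x z).
Proof.
apply: opE => i j; rewrite /opmul /opscale /ketbra /ip mulr_suml.
by apply: eq_bigr => l _; ring.
Qed.

Section Comm.
Variable p : op.
Hypothesis sp : selfadjoint p.
Definition comm (A : op) := opmul A p = opmul p A.

Lemma comm_mul A B : comm A -> comm B -> comm (opmul A B).
Proof. by rewrite /comm => hA hB; rewrite opmulA hB -opmulA hA opmulA. Qed.

Lemma comm_add A B : comm A -> comm B -> comm (opadd A B).
Proof.
rewrite /comm => hA hB; apply: opE => i j.
have := congr1 (fun f => f i j) hA; have := congr1 (fun f => f i j) hB.
rewrite /opmul /opadd => eB eA.
under eq_bigr do rewrite mulrDl; under [RHS]eq_bigr do rewrite mulrDr.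
by rewrite !big_split /= eA eB.
Qed.

Lemma comm_scale c A : comm A -> comm (opscale c A).
Proof. by rewrite /comm opmul_scalel opmul_scaler => ->. Qed.

Lemma comm_sub A B : comm A -> comm B -> comm (opsub A B).
Proof.
move=> hA hB; have -> : opsub A B = opadd A (opscale (-1) B).
  by apply: opE => i j; rewrite /opsub /opadd /opscale mulN1r.
by apply: comm_add => //; apply: comm_scale.
Qed.

Lemma comm_unscale c A : c != 0 -> comm (opscale c A) -> comm A.
Proof. by move=> c0 h; rewrite -(@opscaleK c A c0); apply: comm_scale. Qed.

Lemma comm_adj A : comm A -> comm (adj A).
Proof.
rewrite /comm => h; have := congr1 (@adj R N n) h.
by rewrite !adj_mul sp => ->.
Qed.

Lemma comm_op0 : comm (@op0 R N n).
Proof. by apply: opE => i j; rewrite /opmul /op0 !big1 // => l _; rewrite ?mul0r ?mulr0. Qed.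

Lemma comm_opsum F : (forall k, comm (F k)) -> comm (opsum F).
Proof.
move=> h; apply: opE => i j; rewrite /opmul /opsum.
under eq_bigr do rewrite mulr_suml; under [RHS]eq_bigr do rewrite mulr_sumr.
rewrite exchange_big [RHS]exchange_big; apply: eq_bigr => k _.
by have := congr1 (fun f => f i j) (h k).
Qed.

Lemma comm_of_hyp K : opmul K p = opmul p (opmul K p) ->
  opmul (adj K) p = opmul p (opmul (adj K) p) -> comm K /\ comm (adj K).
Proof.
move=> h1 h2; split.
- have := congr1 (@adj R N n) h2; rewrite !adj_mul adjK sp => e.
  by rewrite /comm h1 -opmulA -e.
- have := congr1 (@adj R N n) h1; rewrite !adj_mul sp => e.
  by rewrite /comm h2 -opmulA -e.
Qed.
End Comm.
End S.


Section S2.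
Variable R : realType.
Local Notation C := R[i].

Lemma rCM (a b : R) : rC a * rC b = rC (a * b).
Proof. by rewrite /rC !complexr0 rmorphM. Qed.

Lemma rC_conj (a : R) : (rC a)^*%C = rC a.
Proof. by rewrite /rC /= oppr0. Qed.

Lemma rC_nat m : (m%:R : C) = rC (m%:R : R).
Proof. by rewrite /rC complexr0 rmorph_nat. Qed.

Lemma rC_eq0 (a : R) : (rC a == 0) = (a == 0).
Proof. by rewrite /rC complexr0 -(rmorph0 (real_complex R)) (inj_eq (@complexI R)). Qed.

Lemma isqrt_conj m : (isqrt R m)^*%C = isqrt R m.
Proof. exact: rC_conj. Qed.

Lemma isqrt2 m : (0 < m)%N -> isqrt R m * isqrt R m * m%:R = 1.
Proof.
move=> m0; rewrite /isqrt rC_nat !rCM.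
have s0 : 0 < Num.sqrt (m%:R : R) by rewrite sqrtr_gt0 ltr0n.
have sn : Num.sqrt (m%:R : R) != 0 by rewrite gt_eqF.
rewrite -invrM ?unitfE // -expr2 sqr_sqrtr ?ler0n // mulVf ?pnatr_eq0 -?lt0n //.
Qed.

Lemma cplx_mul (a b c d : R) : (a +i* b)%C * (c +i* d)%C = ((a * c - b * d) +i* (a * d + b * c))%C.
Proof. by []. Qed.

Lemma zetaX m j : zeta R m ^+ j = (cos (j%:R * (2 * pi / m%:R)) +i* sin (j%:R * (2 * pi / m%:R)))%C.
Proof.
elim: j => [|j IH].
  by rewrite expr0 mul0r cos0 sin0.
rewrite exprS IH /zeta cplx_mul; set t := 2 * pi / m%:R.
rewrite -[j.+1]addn1 natrD mulrDl mul1r addrC cosD sinD.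
congr (_ +i* _)%C; ring.
Qed.

Lemma zeta_order m : (0 < m)%N -> zeta R m ^+ m = 1.
Proof.
move=> m0; rewrite zetaX mulrC mulfVK ?pnatr_eq0 -?lt0n //.
by rewrite mulrC mulr_natr cos2pi sin2pi.
Qed.

Lemma zeta_conj m : (zeta R m)^*%C * zeta R m = 1.
Proof.
rewrite /zeta; set t := 2 * pi / m%:R; rewrite /= cplx_mul; apply/eqP; rewrite eq_complex /=.
apply/andP; split; apply/eqP.
- by rewrite -(cos2Dsin2 t); ring.
- ring.
Qed.

Lemma zeta_neq0 m : zeta R m != 0.
Proof.
apply/negP => /eqP e; have := zeta_conj m; rewrite e mulr0 => /eqP.
by rewrite eq_sym oner_eq0.
Qed.

Lemma zeta_conjV m : (zeta R m)^*%C = (zeta R m)^-1.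
Proof. by apply: (mulIf (zeta_neq0 m)); rewrite zeta_conj mulVf ?zeta_neq0. Qed.

Lemma zetaX_neq1 m d : (0 < d)%N -> (d < m)%N -> zeta R m ^+ d != 1.
Proof.
move=> d0 dm; rewrite zetaX; apply/negP => /eqP [] ec _.
set x := d%:R * (2 * pi / m%:R) in ec.
have m0 : (0 < m%:R :> R) by rewrite ltr0n; apply: leq_ltn_trans dm.
have ex2 : x / 2 = pi * (d%:R / m%:R).
  by rewrite /x; field; rewrite pnatr_eq0 -lt0n ltr0n // in m0 *.
have hx : 0 < x / 2 < pi.
  rewrite ex2; apply/andP; split.
    by rewrite !mulr_gt0 ?ltr0n ?pi_gt0 ?invr_gt0.
  by rewrite gtr_pMr ?pi_gt0 // ltr_pdivrMr // mul1r ltr_nat.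
have hs := sin_gt0_pi hx.
have ex : x = (x / 2) *+ 2 by rewrite -mulr_natr mulfVK ?pnatr_eq0.
rewrite ex cos_mulr2n cos2sin2 mulr2n in ec.
have : sin (x / 2) ^+ 2 = 0 by lra.
by move/eqP; rewrite sqrf_eq0 gt_eqF.
Qed.

Lemma conjX (w : C) k : (w ^+ k)^*%C = (w^*%C) ^+ k.
Proof. by rewrite rmorphXn. Qed.

Lemma zeta_inj m c c' : (c < c')%N -> (c' < m)%N -> zeta R m ^+ c != zeta R m ^+ c'.
Proof.
move=> lt lm; have zb0 : zeta R m ^+ c != 0 by rewrite expf_neq0 ?zeta_neq0.
apply/negP => /eqP e.
have h : zeta R m ^+ c * zeta R m ^+ (c' - c) = zeta R m ^+ c * 1.
  by rewrite -exprD (subnKC (ltnW lt)) mulr1 e.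
have h2 := mulfI zb0 h.
have hp : (0 < c' - c)%N by rewrite subn_gt0.
have hl : (c' - c < m)%N by apply: leq_ltn_trans lm; apply: leq_subr.
have H := @zetaX_neq1 m (c' - c) hp hl.
by rewrite h2 eqxx in H.
Qed.
Lemma zeta_sum m b b' : (b < m)%N -> (b' < m)%N ->
  \sum_(a < m) zeta R m ^+ (b * a) * (zeta R m ^+ (b' * a))^*%C
  = if b == b' then m%:R else 0.
Proof.
move=> bm b'm.
have m0 : (0 < m)%N by apply: leq_ltn_trans bm.
have zb0 : forall j, zeta R m ^+ j != 0 by move=> j; rewrite expf_neq0 ?zeta_neq0.
have E : forall a, zeta R m ^+ (b * a) * (zeta R m ^+ (b' * a))^*%C
   = (zeta R m ^+ b / zeta R m ^+ b') ^+ a.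
  move=> a; rewrite conjX zeta_conjV !exprM exprMn exprVn.
  by rewrite -exprVn.
under eq_bigr do rewrite E.
case: (eqVneq b b') => [eb|ne].
  rewrite eb divff // (eq_bigr (fun _ => 1)) => [|a _]; last by rewrite expr1n.
  by rewrite sumr_const card_ord.
set x := zeta R m ^+ b / zeta R m ^+ b'.
have x1 : x != 1.
  rewrite /x; apply/negP => /eqP e.
  have e' : zeta R m ^+ b = zeta R m ^+ b'.
    have : zeta R m ^+ b / zeta R m ^+ b' * zeta R m ^+ b' = zeta R m ^+ b' by rewrite e mul1r.
    by rewrite mulfVK.
  case: (ltngtP b b') => [lt|lt|eq]; last by rewrite eq eqxx in ne.
  - by move: (@zeta_inj m _ _ lt b'm); rewrite e' eqxx.
  - by move: (@zeta_inj m _ _ lt bm); rewrite e' eqxx.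
have xm : x ^+ m = 1.
  rewrite /x exprMn exprVn -!exprM mulnC exprM (@zeta_order m m0) expr1n.
  by rewrite mulnC exprM (@zeta_order m m0) expr1n invr1 mulr1.
have := subrX1 x m; rewrite xm subrr => /eqP; rewrite eq_sym mulf_eq0 subr_eq0 (negbTE x1) /=.
by move/eqP.
Qed.
End S2.


Section S3.
Variable R : realType.
Local Notation C := R[i].
Variable N : nat.
Variable n : nat -> nat.
Local Notation op := (op R N n).
Local Notation Idx := (Idx N n).

Definition blk (k0 : 'I_N) (a : 'I_(n k0)) : Idx :=
  inr (existT (fun k : 'I_N => 'I_(n k)) k0 a).

Arguments blk {k0} a.

Lemma sum_block (k0 : 'I_N) (F : Idx -> C) :
  (forall l : Idx, (forall a : 'I_(n k0), l != blk a) -> F l = 0) ->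
  \sum_(l : Idx) F l = \sum_(a : 'I_(n k0)) F (blk a).
Proof.
move=> hF.
set S := [set (@blk k0 a) | a : 'I_(n k0)].
rewrite (bigID (fun l => l \in S)) /= [X in _ + X]big1 ?addr0.
- rewrite big_imset /=; last first.
    by move=> a b _ _ [] /eqP; rewrite eq_Tagged => /eqP.
  by apply: eq_bigl => a.
- move=> l hl; apply: hF => a; apply/negP => /eqP e; move: hl.
  rewrite e /S; move/negP; apply; by apply/imsetP; exists a.
Qed.

Lemma ip_phi k (hk : (k < N)%N) : (0 < n k)%N -> @ip R N n (phi R k 0) (phi R k 0) = 1.
Proof.
move=> hn; rewrite /ip (@sum_block (Ordinal hk)).
- rewrite /blk /= eqxx.
  under eq_bigr do rewrite muln0 expr0 invr1 mulr1 isqrt_conj.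
  rewrite sumr_const card_ord -mulr_natr.
  by rewrite (@isqrt2 R (n k) hn).
- case=> [b|[k' b]] hl /=; first by rewrite mulr0.
  case: eqP => ek; last by rewrite mulr0.
  have ek' : k' = Ordinal hk by apply: val_inj.
  subst k'; by move: (hl b); rewrite eqxx.
Qed.

Lemma conjM' (x y : C) : (x * y)^*%C = (x^*%C) * (y^*%C).
Proof. by rewrite rmorphM. Qed.

Lemma blk_eq (k1 : 'I_N) (b b' : 'I_(n k1)) : (@blk k1 b == blk b') = (b == b').
Proof.
apply/eqP/eqP => [|->] //.
by move=> [] /eqP; rewrite eq_Tagged => /eqP.
Qed.

Definition inblk (m : nat) (i : Idx) : bool :=
  match i with inr (existT k1 _) => val k1 == m | _ => false end.

Lemma Zrow0 k i l : ~~ inblk k.+1 i -> Z R k i l = 0.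
Proof.
case: i => [//|[k1 b]] /= h; case: l => [//|[k0 a]].
by rewrite /Z (negbTE h).
Qed.

Lemma Zcol0 k i l : ~~ inblk k l -> Z R k i l = 0.
Proof.
case: l => [|[k0 a]] /= h; first by case: i => [|[]].
by case: i => [//|[k1 b]]; rewrite /Z (negbTE h) andbF.
Qed.

Lemma Pblock0 m i j : ~~ inblk m i -> Pblock R m i j = 0.
Proof.
rewrite /Pblock; case: eqP => // _; case: i => [//|[k1 b]] /= h.
by rewrite (negbTE h).
Qed.

Lemma ZZadj k (hk : (k.+1 < N)%N) : (n k.+1 <= n k)%N -> (0 < n k)%N ->
  @opmul R N n (Z R k) (@adj R N n (Z R k)) = Pblock R k.+1.
Proof.
move=> mono hn; have hk0 : (k < N)%N by apply: ltnW.
apply: opE => i j; rewrite /opmul /adj.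
have [hi|hi] := boolP (inblk k.+1 i); last first.
  by rewrite Pblock0 // big1 // => l _; rewrite Zrow0 // mul0r.
have [hj|hj] := boolP (inblk k.+1 j); last first.
  rewrite big1; last by move=> l _; rewrite (@Zrow0 k j) // conjc0 mulr0.
  rewrite /Pblock; case: eqP => // eij; by rewrite eij (negbTE hj) in hi.
case: i hi => [//|[k1 b]] /= e1.
case: j hj => [//|[k2 b']] /= e2.
have ek : k2 = k1 by apply: val_inj; rewrite /= (eqP e1) (eqP e2).
subst k2.
rewrite (@sum_block (Ordinal hk0)); last first.
  case=> [bl|[k0 a]] hl; first by rewrite mul0r.
  rewrite e1 /=; case: eqP => ek0; last by rewrite mul0r.
  have ek' : k0 = Ordinal hk0 by apply: val_inj.
  by subst k0; move: (hl a); rewrite eqxx.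
rewrite /blk e1 eqxx /=.
have hb : forall c : 'I_(n k1), (c < n k)%N.
  by move=> c; apply: leq_trans mono; rewrite -(eqP e1); exact: ltn_ord.
under eq_bigr do rewrite conjM' isqrt_conj mulrACA.
rewrite -mulr_sumr zeta_sum ?hb //.
rewrite /Pblock -/(blk b) -/(blk b') blk_eq.
case: (eqVneq b b') => [eb|ne]; last first.
  have ne' : (nat_of_ord b == nat_of_ord b') = false by exact: negbTE ne.
  by rewrite ne' mulr0.
by rewrite eb eqxx /= e1 (@isqrt2 R (n k) hn).
Qed.
End S3.

Section S4.
Variable R : realType.
Local Notation C := R[i].
Variable N : nat.
Variable n : nat -> nat.
Variables Gam gam : bool -> Omega N -> R.
Local Notation op := (op R N n).

Lemma Lstar_zero (x : op) : selfadjoint x ->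
  (forall eps w, @comm R N n x (@Kraus R N n Gam eps w)) -> @comm R N n x (@Heff R N n gam) ->
  Lstar Gam gam x = @op0 R N n.
Proof.
move=> sx hK hH; apply: opE => i j; rewrite /Lstar /op0.
have -> : opmul (Heff gam) x i j - opmul x (Heff gam) i j = 0.
  by rewrite hH subrr.
rewrite mulr0 add0r big1 // => w _; rewrite big1 // => eps _ /=.
set L := Kraus Gam eps w.
have hL : @comm R N n x L by apply: hK.
have hLL : @comm R N n x (opmul (adj L) L) by apply: comm_mul => //; apply: comm_adj.
rewrite opmulA -hL -opmulA -hLL.
set y := opmul _ x i j.
by field.
Qed.

Lemma ip_basis (x : Idx N n) : @ip R N n (Defs.basis R x) (Defs.basis R x) = 1.
Proof.
rewrite /ip (bigD1 x) //= big1 => [|l hl]; first by rewrite /Defs.basis eqxx conjc1 mulr1 addr0.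
by rewrite /Defs.basis (negbTE hl) mulr0.
Qed.

Lemma Lstar0 : Lstar Gam gam (@op0 R N n) = @op0 R N n.
Proof.
have c0 : forall A, @comm R N n (@op0 R N n) A.
  by move=> A; apply: opE => i j; rewrite /opmul /op0 !big1 // => l _; rewrite ?mul0r ?mulr0.
apply: Lstar_zero => [|eps w|] //.
by apply: opE => i j; rewrite /adj /op0 conjc0.
Qed.

Variable p : op.
Hypothesis N2 : (2 <= N)%N.
Hypothesis mono : forall i j : nat, (i <= j)%N -> (j < N)%N -> (n j <= n i)%N.
Hypothesis nN : (1 <= n N.-1)%N.
Hypothesis Gpos : forall (eps : bool) (w : Omega N), 0 < Gam eps w.
Hypothesis sp : selfadjoint p.
Hypothesis hyp : forall w : Omega N,
     opmul (@Kraus R N n Gam false w) p = opmul p (opmul (@Kraus R N n Gam false w) p) /\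
     opmul (adj (@Kraus R N n Gam false w)) p
       = opmul p (opmul (adj (@Kraus R N n Gam false w)) p).

Lemma npos k : (k < N)%N -> (0 < n k)%N.
Proof.
move=> hk; apply: (leq_trans nN); apply: mono; last by rewrite prednK ?ltnSn //; apply: leq_ltn_trans hk.
by rewrite -ltnS prednK //; apply: leq_ltn_trans hk.
Qed.

Let cK w : @comm R N n p (Kraus Gam false w) /\ @comm R N n p (adj (Kraus Gam false w)).
Proof. by case: (hyp w) => h1 h2; apply: comm_of_hyp. Qed.

Lemma sqrt_neq0 (a : R) : 0 < a -> rC (Num.sqrt a) != 0.
Proof. by move=> a0; rewrite rC_eq0 sqrtr_eq0 -ltNge. Qed.

Let Kp := ketbra (@phi01 R N n) (@ket_plus R N n).
Let Km := ketbra (@ket_minus R N n) (@phi0N R N n).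

Lemma cKp : @comm R N n p Kp.
Proof.
have := (cK (inl true)).1; apply: comm_unscale.
apply: sqrt_neq0; apply: mulr_gt0 => //; rewrite ltr0n; apply: npos.
by apply: leq_trans N2.
Qed.

Lemma cKm : @comm R N n p Km.
Proof. by have := (cK (inl false)).1; apply: comm_unscale; apply: sqrt_neq0. Qed.

Lemma cZ (k : 'I_N.-1) : @comm R N n p (Z R (val k)).
Proof. by have := (cK (inr k)).1; apply: comm_unscale; apply: sqrt_neq0. Qed.

Lemma cKraus eps w : @comm R N n p (Kraus Gam eps w).
Proof.
case: eps; last exact: (cK w).1.
case: w => [[]|k] /=.
- apply: comm_scale; rewrite -adj_ketbra; apply: comm_adj => //; exact: cKp.
- exact: comm_op0.
- apply: comm_scale; apply: comm_adj => //; exact: cZ.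
Qed.

Lemma hN1 : (N.-1 < N)%N.
Proof. by rewrite prednK ?ltnSn //; apply: leq_trans N2. Qed.

Lemma h0 : (0 < N)%N.
Proof. by apply: leq_trans N2. Qed.

Lemma cHeff : @comm R N n p (Heff gam).
Proof.
have one0 : (1 : C) != 0 by rewrite oner_neq0.
rewrite /Heff; apply: comm_add; [|apply: comm_add; [|apply: comm_add; [|apply: comm_add]]];
  try apply: comm_scale.
- apply: (@comm_unscale R N n p (@ip R N n (@phi01 R N n) (@phi01 R N n))).
    by rewrite /phi01 (@ip_phi R N n 0 h0 (@npos 0 h0)).
  rewrite /P_plus -ketbra_mul -adj_ketbra; apply: comm_mul; last exact: cKp.
  by apply: comm_adj => //; exact: cKp.
- apply: (@comm_unscale R N n p (@ip R N n (@ket_plus R N n) (@ket_plus R N n))).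
    by rewrite ip_basis.
  rewrite -ketbra_mul -[ketbra (@ket_plus R N n) _]adj_ketbra; apply: comm_mul; first exact: cKp.
  by apply: comm_adj => //; exact: cKp.
- apply: (@comm_unscale R N n p (@ip R N n (@ket_minus R N n) (@ket_minus R N n))).
    by rewrite ip_basis.
  rewrite -ketbra_mul -[ketbra _ (@ket_minus R N n)]adj_ketbra; apply: comm_mul; last exact: cKm.
  by apply: comm_adj => //; exact: cKm.
- apply: (@comm_unscale R N n p (@ip R N n (@phi0N R N n) (@phi0N R N n))).
    by rewrite /phi0N (@ip_phi R N n N.-1 hN1 (@npos N.-1 hN1)).
  rewrite /P_minus -ketbra_mul -[ketbra _ (@ket_minus R N n)]adj_ketbra; apply: comm_mul; first exact: cKm.
  by apply: comm_adj => //; exact: cKm.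
- apply: comm_opsum => k; apply: comm_sub; apply: comm_scale.
    by rewrite /absZ; apply: comm_mul; [apply: comm_adj|]; rewrite //; exact: cZ.
  have hk : ((val k).+1 < N)%N.
    by have := ltn_ord k; rewrite -ltnS prednK //; apply: leq_trans N2.
  rewrite -ZZadj //; last by apply: npos; apply: ltnW.
    by apply: comm_mul; [|apply: comm_adj]; rewrite //; exact: cZ.
  by apply: mono => //.
Qed.
End S4.


Theorem lemma3p2 (R : realType) (N : nat) (n : nat -> nat)
  (Gam gam : bool -> Omega N -> R) (p : op R N n) :
  (2 <= N)%N ->
  (forall i j : nat, (i <= j)%N -> (j < N)%N -> (n j <= n i)%N) ->
  (1 <= n N.-1)%N ->
  (forall (eps : bool) (w : Omega N), 0 < Gam eps w) ->
  selfadjoint p ->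
  (forall w : Omega N,
     opmul (@Kraus R N n Gam false w) p = opmul p (opmul (@Kraus R N n Gam false w) p) /\
     opmul (adj (@Kraus R N n Gam false w)) p
       = opmul p (opmul (adj (@Kraus R N n Gam false w)) p)) ->
  @is_harmonic R N n Gam gam p.
Proof.
move=> N2 mono nN Gpos sp hyp.
split => // t t0 i j.
have it : forall k, iter k.+1 (Lstar Gam gam) p = @op0 R N n.
  elim => [|k IH].
    apply: Lstar_zero => // [eps w|].
      exact: (@cKraus R N n Gam p N2 mono nN Gpos sp hyp).
    exact: (@cHeff R N n Gam gam p N2 mono nN Gpos sp hyp).
  by rewrite iterS IH Lstar0.
have E : forall M, (0 < M)%N -> expL_partial Gam gam t p M i j = p i j.
  case => // M _; rewrite /expL_partial big_ord_recl /= big1 ?addr0.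
    by rewrite expr0 fact0 divr1 (_ : rC 1 = 1) ?mul1r.
  by move=> k _; rewrite add0n -iterS it /op0 mulr0.
split; [apply: (cvg_near_cst (complex.Re (p i j)))|apply: (cvg_near_cst (complex.Im (p i j)))]; exists 1%N => //; move=> M /= hM; by rewrite E.
Qed.
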